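(* Suppose the solution sets of (P) and (D) are nonempty and $A$ has full row rank, and suppose $\{\tau_k\}$ is positive, nonincreasing and $\tau_k\downarrow\tau_\infty>0$. Let $\{(y^k,x^k)\}$ be generated by Algorithm Snipal (described below) where each $y^{k+1}$ satisfies the stopping criterion (A'): $\|\nabla\psi_k(y^{k+1})\|\le\frac{\min(\sqrt{\tau_k},1)}{\sigma_k}\epsilon_k$ with $\epsilon_k\ge0$, $\sum_k\epsilon_k<\infty$. Then $\{(y^k,x^k)\}$ is bounded, $\{x^k\}$ converges to an optimal solution of (P) and $\{y^k\}$ converges to an optimal solution of (D).
   Context: Data: $A\in\mathbb{R}^{m\times n}$, $b\in\mathbb{R}^m$, $c\in\mathbb{R}^n$, $K=\{x\in\mathbb{R}^n\mid l\le x\le u\}$ with $l_i\in[-\infty,\infty)$, $u_i\in(-\infty,\infty]$; $\delta_K$ its indicator, $\delta_K^*$ its Fenchel conjugate, $\Pi_K$ the projection onto $K$. (P): $\min\{c^Tx+\delta_K(x)\mid Ax=b\}$; (D): $\max\{-\delta_K^*(A^Ty-c)+b^Ty\mid y\in\mathbb{R}^m\}$. Augmented Lagrangian $L_\sigma(y;x)=-b^Ty-\langle\Pi_K(x-\sigma(c-A^Ty)),c-A^Ty\rangle-\frac{1}{2\sigma}\|\Pi_K(x-\sigma(c-A^Ty))-x\|^2$. Algorithm Snipal: given $(x^0,y^0)$, $\sigma_0>0$, a nondecreasing sequence $\sigma_k\uparrow\sigma_\infty\le\infty$ and a positive nonincreasing sequence $\{\tau_k\}$; for $k=0,1,\dots$: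 compute $y^{k+1}$ as an approximate minimizer of $\psi_k(y):=L_{\sigma_k}(y;x^k)+\frac{\tau_k}{2\sigma_k}\|y-y^k\|^2$, then set $x^{k+1}=\Pi_K(x^k-\sigma_k(c-A^Ty^{k+1}))$. Here $\nabla\psi_k(y)=-b+A\Pi_K(x^k+\sigma_k(A^Ty-c))+\tau_k\sigma_k^{-1}(y-y^k)$. *)

(* Defs.v *)
(* classical reals. Vectors in R^n are functions nat -> R,
   only the indices i < n are relevant; matrices are nat -> nat -> R. *)
From Stdlib Require Import Reals Lra.
Open Scope R_scope.

Fixpoint rsum (n : nat) (f : nat -> R) : R :=
  match n with O => 0 | S k => rsum k f + f k end.

Definition vec := nat -> R.
Definition dot (n : nat) (u v : vec) : R := rsum n (fun i => u i * v i).
Definition vnorm (n : nat) (v : vec) : R := sqrt (dot n v v).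
Definition vadd (u v : vec) : vec := fun i => u i + v i.
Definition vsub (u v : vec) : vec := fun i => u i - v i.
Definition vscal (a : R) (v : vec) : vec := fun i => a * v i.
Definition mulA (n : nat) (A : nat -> nat -> R) (x : vec) : vec :=
  fun i => rsum n (fun j => A i j * x j).
Definition mulAt (m : nat) (A : nat -> nat -> R) (y : vec) : vec :=
  fun j => rsum m (fun i => A i j * y i).

Definition full_row_rank (m n : nat) (A : nat -> nat -> R) : Prop :=
  forall y : vec, (forall j, (j < n)%nat -> mulAt m A y j = 0) ->
    forall i, (i < m)%nat -> y i = 0.

(* Box K = {x | l <= x <= u}; lower bounds l i = None means -infinity,
   upper bounds u i = None means +infinity. *)
Definition inK (n : nat) (l u : nat -> option R) (x : vec) : Prop :=
  forall i, (i < n)%nat ->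
    (match l i with Some a => a <= x i | None => True end) /\
    (match u i with Some b => x i <= b | None => True end).

Definition projK (l u : nat -> option R) (x : vec) : vec :=
  fun i =>
    let v := match l i with Some a => Rmax a (x i) | None => x i end in
    match u i with Some b => Rmin b v | None => v end.

(* (P): min { c^T x + delta_K(x) | A x = b } *)
Definition P_feasible (m n : nat) (A : nat -> nat -> R) (b : vec)
  (l u : nat -> option R) (x : vec) : Prop :=
  inK n l u x /\ forall i, (i < m)%nat -> mulA n A x i = b i.

Definition P_optimal (m n : nat) (A : nat -> nat -> R) (b c : vec)
  (l u : nat -> option R) (x : vec) : Prop :=
  P_feasible m n A b l u x /\
  forall x', P_feasible m n A b l u x' -> dot n c x <= dot n c x'.

(* delta_K^*(z) = sup_{x in K} <z, x>; conj_val ... z v : this sup is finite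
   and equals v *)
Definition conj_val (n : nat) (l u : nat -> option R) (z : vec) (v : R) : Prop :=
  is_lub (fun r => exists x, inK n l u x /\ r = dot n z x) v.

(* (D): max { -delta_K^*(A^T y - c) + b^T y }; optimal y: the objective is
   finite at y and no y' achieves a larger (finite) value *)
Definition D_optimal (m n : nat) (A : nat -> nat -> R) (b c : vec)
  (l u : nat -> option R) (y : vec) : Prop :=
  exists v, conj_val n l u (vsub (mulAt m A y) c) v /\
  forall y' v', conj_val n l u (vsub (mulAt m A y') c) v' ->
    - v' + dot m b y' <= - v + dot m b y.

(* gradient of psi_k(y) = L_{sigma}(y; xk) + tau/(2 sigma) ||y - yk||^2 :
   -b + A Pi_K(xk + sigma (A^T y - c)) + (tau/sigma) (y - yk) *)
Definition grad_psi (m n : nat) (A : nat -> nat -> R) (b c : vec)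
  (l u : nat -> option R) (sigma tau : R) (xk yk y : vec) : vec :=
  vadd (vadd (vscal (-1) b)
             (mulA n A (projK l u (vadd xk (vscal sigma (vsub (mulAt m A y) c))))))
       (vscal (tau / sigma) (vsub y yk)).

(* Main.v *)
Require Import Defs.
From Stdlib Require Import Reals Lra Lia Psatz List Classical ClassicalEpsilon FunctionalExtensionality ZArith.
Import ListNotations.
Open Scope R_scope.

Lemma rsum_ext n f g : (forall i, (i < n)%nat -> f i = g i) -> rsum n f = rsum n g.
Proof. induction n; simpl; intros H; auto. rewrite IHn by (intros; apply H; lia). rewrite (H n) by lia. auto. Qed.

Lemma rsum_le n f g : (forall i, (i < n)%nat -> f i <= g i) -> rsum n f <= rsum n g.
Proof. induction n; simpl; intros H; [lra|]. assert (rsum n f <= rsum n g) by (apply IHn; intros; apply H; lia).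
 assert (f n <= g n) by (apply H; lia). lra. Qed.

Lemma rsum_plus n f g : rsum n (fun i => f i + g i) = rsum n f + rsum n g.
Proof. induction n; simpl; [lra|]. rewrite IHn. lra. Qed.

Lemma rsum_scal n r f : rsum n (fun i => r * f i) = r * rsum n f.
Proof. induction n; simpl; [lra|]. rewrite IHn. lra. Qed.

Lemma rsum_minus n f g : rsum n (fun i => f i - g i) = rsum n f - rsum n g.
Proof. induction n; simpl; [lra|]. rewrite IHn. lra. Qed.

Lemma rsum_zero n : rsum n (fun _ => 0) = 0.
Proof. induction n; simpl; lra. Qed.

Lemma rsum_nonneg n f : (forall i, (i < n)%nat -> 0 <= f i) -> 0 <= rsum n f.
Proof. intros H. rewrite <- (rsum_zero n). apply rsum_le. auto. Qed.

Lemma rsum_nonpos n f : (forall i, (i < n)%nat -> f i <= 0) -> rsum n f <= 0.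
Proof. intros H. rewrite <- (rsum_zero n). apply rsum_le. auto. Qed.

Lemma rsum_term_le n f j : (forall i, (i < n)%nat -> 0 <= f i) -> (j < n)%nat -> f j <= rsum n f.
Proof. induction n; simpl; intros H Hj; [lia|].
 assert (0 <= rsum n f) by (apply rsum_nonneg; intros; apply H; lia).
 destruct (Nat.eq_dec j n). subst. lra.
 assert (f j <= rsum n f) by (apply IHn; [intros; apply H; lia| lia]).
 assert (0 <= f n) by (apply H; lia). lra. Qed.

Lemma rsum_swap n m (f : nat -> nat -> R) :
  rsum n (fun i => rsum m (fun j => f i j)) = rsum m (fun j => rsum n (fun i => f i j)).
Proof. induction n; simpl. rewrite rsum_zero; auto. rewrite IHn. rewrite <- rsum_plus. auto. Qed.

Lemma rsum_cv n (f : nat -> nat -> R) (L : nat -> R) :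
  (forall i, (i < n)%nat -> Un_cv (fun k => f k i) (L i)) ->
  Un_cv (fun k => rsum n (f k)) (rsum n L).
Proof. induction n; simpl; intros H.
 - intros e He. exists 0%nat. intros. unfold R_dist. rewrite Rminus_diag, Rabs_R0. auto.
 - apply CV_plus. apply IHn. intros; apply H; lia. apply H; lia. Qed.

Lemma dot_comm n u v : dot n u v = dot n v u.
Proof. unfold dot. apply rsum_ext. intros; ring. Qed.

Lemma dot_ext n u u' v v' : (forall i, (i<n)%nat -> u i = u' i) -> (forall i, (i<n)%nat -> v i = v' i) ->
  dot n u v = dot n u' v'.
Proof. intros H1 H2. unfold dot. apply rsum_ext. intros. rewrite H1, H2; auto. Qed.

Lemma dot_nonneg n u : 0 <= dot n u u.
Proof. unfold dot. apply rsum_nonneg. intros. nra. Qed.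

Lemma vnorm_sq n u : vnorm n u * vnorm n u = dot n u u.
Proof. unfold vnorm. apply sqrt_sqrt. apply dot_nonneg. Qed.

Lemma vnorm_nonneg n u : 0 <= vnorm n u.
Proof. unfold vnorm. apply sqrt_pos. Qed.

Lemma CS_sq n u v : dot n u v * dot n u v <= dot n u u * dot n v v.
Proof.
 assert (Hq : forall t, 0 <= dot n u u - 2 * t * dot n u v + t * t * dot n v v).
 { intros t. assert (0 <= dot n (fun i => u i - t * v i) (fun i => u i - t * v i)) by apply dot_nonneg.
   unfold dot in *. replace (rsum n (fun i => u i * u i) - 2 * t * rsum n (fun i => u i * v i) + t * t * rsum n (fun i => v i * v i))
   with (rsum n (fun i => (u i - t * v i) * (u i - t * v i))). auto.
   rewrite <- !rsum_scal. rewrite <- rsum_minus, <- rsum_plus. apply rsum_ext. intros; ring. }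
 pose proof (dot_nonneg n u). pose proof (dot_nonneg n v).
 destruct (Req_dec (dot n v v) 0) as [Hz|Hz].
 - rewrite Hz. destruct (Req_dec (dot n u v) 0) as [Hz2|Hz2]. rewrite Hz2; lra.
   specialize (Hq ((dot n u u + 1) / (2 * dot n u v))). rewrite Hz in Hq.
   replace (2 * ((dot n u u + 1) / (2 * dot n u v)) * dot n u v) with (dot n u u + 1) in Hq by (field; auto). lra.
 - specialize (Hq (dot n u v / dot n v v)).
   assert (0 < dot n v v) by lra.
   replace (dot n u u - 2 * (dot n u v / dot n v v) * dot n u v + dot n u v / dot n v v * (dot n u v / dot n v v) * dot n v v)
     with (dot n u u - dot n u v * dot n u v / dot n v v) in Hq by (field; lra).
   assert (dot n u v * dot n u v / dot n v v <= dot n u u) by lra.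
   apply Rmult_le_reg_r with (/ dot n v v). apply Rinv_0_lt_compat; auto.
   replace (dot n u u * dot n v v * / dot n v v) with (dot n u u) by (field; lra). unfold Rdiv in H2. lra.
Qed.

Lemma CS n u v : dot n u v <= vnorm n u * vnorm n v.
Proof. pose proof (CS_sq n u v). pose proof (vnorm_sq n u). pose proof (vnorm_sq n v).
 pose proof (vnorm_nonneg n u). pose proof (vnorm_nonneg n v).
 destruct (Rle_dec (dot n u v) 0). nra.
 apply Rsqr_incr_0_var. unfold Rsqr. nra. nra. Qed.

Lemma comp_le_vnorm n v i : (i < n)%nat -> Rabs (v i) <= vnorm n v.
Proof. intros Hi. pose proof (vnorm_sq n v). pose proof (vnorm_nonneg n v).
 assert (v i * v i <= dot n v v) by (unfold dot; apply (rsum_term_le n (fun i => v i * v i)); [intros; nra| auto]).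
 apply Rsqr_incr_0_var. unfold Rsqr. rewrite <- Rabs_mult. rewrite Rabs_right by nra. nra. auto. Qed.

Lemma vnorm_triangle n u v : vnorm n (vadd u v) <= vnorm n u + vnorm n v.
Proof. pose proof (CS n u v). pose proof (vnorm_sq n u). pose proof (vnorm_sq n v).
 pose proof (vnorm_sq n (vadd u v)).
 pose proof (vnorm_nonneg n u). pose proof (vnorm_nonneg n v). pose proof (vnorm_nonneg n (vadd u v)).
 assert (dot n (vadd u v) (vadd u v) = dot n u u + 2 * dot n u v + dot n v v).
 { unfold dot, vadd. rewrite <- rsum_scal, <- !rsum_plus. apply rsum_ext; intros; ring. }
 apply Rsqr_incr_0_var. unfold Rsqr. nra. nra. Qed.

Lemma vnorm_le_sqrt n v M : 0 <= M -> dot n v v <= M * M -> vnorm n v <= M.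
Proof. intros. pose proof (vnorm_sq n v). pose proof (vnorm_nonneg n v).
 apply Rsqr_incr_0_var; unfold Rsqr; nra. Qed.

Lemma dot_sub_l n u v w : dot n (vsub u v) w = dot n u w - dot n v w.
Proof. unfold dot, vsub. rewrite <- rsum_minus. apply rsum_ext; intros; ring. Qed.
Lemma dot_sub_r n u v w : dot n w (vsub u v) = dot n w u - dot n w v.
Proof. unfold dot, vsub. rewrite <- rsum_minus. apply rsum_ext; intros; ring. Qed.

Lemma adjoint m n A y x : dot n (mulAt m A y) x = dot m y (mulA n A x).
Proof. unfold dot, mulAt, mulA.
 transitivity (rsum n (fun i => rsum m (fun j => A j i * y j * x i))).
 apply rsum_ext; intros. rewrite Rmult_comm, <- rsum_scal. apply rsum_ext; intros; ring.
 rewrite rsum_swap. apply rsum_ext; intros. rewrite <- rsum_scal. apply rsum_ext; intros; ring. Qed.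

Lemma mulA_sub n A x x' j : mulA n A (vsub x x') j = mulA n A x j - mulA n A x' j.
Proof. unfold mulA, vsub. rewrite <- rsum_minus. apply rsum_ext; intros; ring. Qed.

Definition KKT m n A (b c : vec) l u (y x : vec) : Prop :=
  inK n l u x /\ (forall j, (j < m)%nat -> mulA n A x j = b j) /\
  (forall w, inK n l u w -> dot n (vsub (mulAt m A y) c) (vsub w x) <= 0).

Lemma KKT_P m n A b c l u y x : KKT m n A b c l u y x -> P_optimal m n A b c l u x.
Proof. intros [HK [HA HN]]. split. split; auto.
 intros x' [HK' HA']. specialize (HN x' HK'). rewrite dot_sub_l, adjoint in HN.
 assert (dot m y (mulA n A (vsub x' x)) = 0).
 { unfold dot. rewrite <- (rsum_zero m). apply rsum_ext. intros. rewrite mulA_sub, HA, HA'; auto. ring. }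
 rewrite H, dot_sub_r in HN. lra. Qed.

Lemma KKT_D m n A b c l u y x : KKT m n A b c l u y x -> D_optimal m n A b c l u y.
Proof. intros [HK [HA HN]].
 assert (Hb : forall y', dot n (mulAt m A y') x = dot m b y').
 { intros. rewrite adjoint, dot_comm. unfold dot. apply rsum_ext. intros; rewrite HA; auto. }
 exists (dot n (vsub (mulAt m A y) c) x). split.
 - split. intros r [w [Hw ->]]. specialize (HN w Hw). rewrite dot_sub_r in HN. lra.
   intros r Hr. apply Hr. exists x. auto.
 - intros y' v' [Hub _]. assert (dot n (vsub (mulAt m A y') c) x <= v') by (apply Hub; exists x; auto).
   rewrite dot_sub_l, Hb in H. rewrite dot_sub_l, Hb. lra. Qed.

Lemma inK_bounds n l u x0 i : inK n l u x0 -> (i < n)%nat ->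
  match l i, u i with Some a, Some b' => a <= b' | _, _ => True end.
Proof. intros H Hi. destruct (H i Hi). destruct (l i), (u i); auto. lra. Qed.

Lemma proj_in n l u x0 w : inK n l u x0 -> inK n l u (projK l u w).
Proof. intros H i Hi. pose proof (inK_bounds n l u x0 i H Hi). unfold projK.
 destruct (l i) as [a|], (u i) as [b'|]; simpl; split; auto;
 unfold Rmax, Rmin; repeat destruct Rle_dec; lra. Qed.

Lemma proj_ineq n l u w w' i : inK n l u w' -> (i < n)%nat ->
  (w i - projK l u w i) * (w' i - projK l u w i) <= 0.
Proof. intros H Hi. destruct (H i Hi) as [H1 H2]. unfold projK.
 destruct (l i) as [a|], (u i) as [b'|]; simpl in *;
 unfold Rmax, Rmin; repeat destruct Rle_dec; nra. Qed.

Lemma proj_dot n l u w w' : inK n l u w' ->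
  dot n (vsub w (projK l u w)) (vsub w' (projK l u w)) <= 0.
Proof. intros H. apply rsum_nonpos. intros. unfold vsub. apply (proj_ineq n); auto. Qed.

Inductive deriv (S : list (vec * R)) : vec -> R -> Prop :=
| dv_in : forall a b, In (a, b) S -> deriv S a b
| dv_add : forall a1 b1 a2 b2, deriv S a1 b1 -> deriv S a2 b2 -> deriv S (vadd a1 a2) (b1 + b2)
| dv_scal : forall r a b, 0 <= r -> deriv S a b -> deriv S (vscal r a) (r * b).

Definition comb (p : nat) (e1 e2 : vec * R) : vec * R :=
  (vadd (vscal (- fst e2 p) (fst e1)) (vscal (fst e1 p) (fst e2)),
   (- fst e2 p) * snd e1 + fst e1 p * snd e2).

Definition elim (p : nat) (S : list (vec * R)) : list (vec * R) :=
  flat_map (fun e => if Req_EM_T (fst e p) 0 then [e] else []) S ++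
  flat_map (fun e1 => flat_map (fun e2 =>
     if Rlt_dec 0 (fst e1 p) then if Rlt_dec (fst e2 p) 0 then [comb p e1 e2] else [] else []) S) S.

Lemma elim_in p S e : In e (elim p S) ->
  (In e S /\ fst e p = 0) \/
  exists e1 e2, In e1 S /\ In e2 S /\ 0 < fst e1 p /\ fst e2 p < 0 /\ e = comb p e1 e2.
Proof. unfold elim. rewrite in_app_iff, !in_flat_map. intros [[e0 [H1 H2]]|[e1 [H1 H2]]].
 - left. destruct Req_EM_T; simpl in H2; [|tauto]. destruct H2 as [<-|[]]. auto.
 - right. rewrite in_flat_map in H2. destruct H2 as [e2 [H3 H4]].
   destruct Rlt_dec; [|simpl in H4; tauto]. destruct Rlt_dec; [|simpl in H4; tauto].
   destruct H4 as [<-|[]]. exists e1, e2. auto. Qed.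

Lemma elim_in1 p S e : In e S -> fst e p = 0 -> In e (elim p S).
Proof. intros. unfold elim. apply in_app_iff. left. apply in_flat_map. exists e. split; auto.
 destruct Req_EM_T; [left; auto | contradiction]. Qed.

Lemma elim_in2 p S e1 e2 : In e1 S -> In e2 S -> 0 < fst e1 p -> fst e2 p < 0 -> In (comb p e1 e2) (elim p S).
Proof. intros. unfold elim. apply in_app_iff. right. apply in_flat_map. exists e1. split; auto.
 apply in_flat_map. exists e2. split; auto. destruct Rlt_dec; [|lra]. destruct Rlt_dec; [left; auto|lra]. Qed.

Lemma deriv_mono S S' a b : (forall e, In e S' -> deriv S (fst e) (snd e)) -> deriv S' a b -> deriv S a b.
Proof. intros H D. induction D. apply (H (a, b)); auto. apply dv_add; auto. apply dv_scal; auto. Qed.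

Lemma deriv_pres S p a b : (forall e, In e S -> fst e p = 0) -> deriv S a b -> a p = 0.
Proof. intros H D. induction D. apply (H (a, b)); auto. unfold vadd. rewrite IHD1, IHD2; ring.
 unfold vscal. rewrite IHD; ring. Qed.

Lemma sep {T} (S : list T) (P Q : T -> Prop) (g : T -> R) :
  (forall e1 e2, In e1 S -> In e2 S -> P e1 -> Q e2 -> g e2 <= g e1) ->
  exists t, forall e, In e S -> (P e -> t <= g e) /\ (Q e -> g e <= t).
Proof. induction S as [|e S IH]; intros H.
 - exists 0. intros e [].
 - destruct IH as [t' Ht']. { intros; apply H; simpl; auto. }
   destruct (classic (P e /\ g e < t')) as [[HP Hlt]|HN1].
   + exists (g e). intros e0 [<-|Hin]. split; intros; lra.
     split; intros. destruct (Ht' e0 Hin) as [A1 _]. specialize (A1 H0). lra.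
     apply H; simpl; auto.
   + destruct (classic (Q e /\ t' < g e)) as [[HQ Hlt]|HN2].
     * exists (g e). intros e0 [<-|Hin]. split; intros; lra.
       split; intros. apply H; simpl; auto.
       destruct (Ht' e0 Hin) as [_ A1]. specialize (A1 H0). lra.
     * exists t'. intros e0 [<-|Hin]; [|apply Ht'; auto].
       split; intros. destruct (Rlt_dec (g e) t'); [exfalso; apply HN1; auto|lra].
       destruct (Rlt_dec t' (g e)); [exfalso; apply HN2; auto|lra].
Qed.

Lemma dot_comb n u v r s y : dot n (vadd (vscal r u) (vscal s v)) y = r * dot n u y + s * dot n v y.
Proof. unfold dot, vadd, vscal. rewrite <- !rsum_scal, <- rsum_plus. apply rsum_ext; intros; ring. Qed.

Theorem FM p : forall S : list (vec * R),
  (forall y, exists e, In e S /\ dot p (fst e) y > snd e) ->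
  exists a b, deriv S a b /\ (forall i, (i < p)%nat -> a i = 0) /\ b < 0.
Proof.
 induction p as [|p IH]; intros S H.
 - destruct (H (fun _ => 0)) as [[a b] [Hin Hd]]. exists a, b. split. constructor; auto.
   split. intros; lia. unfold dot in Hd; simpl in Hd. lra.
 - assert (H' : forall y, exists e, In e (elim p S) /\ dot p (fst e) y > snd e).
   { apply NNPP. intros Hc. apply not_all_ex_not in Hc. destruct Hc as [y Hy].
     assert (Hsat : forall e, In e (elim p S) -> dot p (fst e) y <= snd e).
     { intros e He. apply Rnot_lt_le. intros Hlt. apply Hy. exists e. split; auto. }
     destruct (sep S (fun e => 0 < fst e p) (fun e => fst e p < 0)
                (fun e => (snd e - dot p (fst e) y) / fst e p)) as [t Ht].
     { intros e1 e2 H1 H2 P1 Q2. pose proof (Hsat _ (elim_in2 p S e1 e2 H1 H2 P1 Q2)) as Hc.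
       unfold comb in Hc; simpl in Hc. rewrite dot_comb in Hc.
       set (q1 := (snd e1 - dot p (fst e1) y) / fst e1 p).
       set (q2 := (snd e2 - dot p (fst e2) y) / fst e2 p).
       assert (E1 : snd e1 - dot p (fst e1) y = q1 * fst e1 p) by (unfold q1; field; lra).
       assert (E2 : snd e2 - dot p (fst e2) y = q2 * fst e2 p) by (unfold q2; field; lra).
       assert (fst e1 p * (q2 * fst e2 p) - fst e2 p * (q1 * fst e1 p) >= 0) by (rewrite <- E1, <- E2; lra).
       assert (0 < fst e1 p * (- fst e2 p)) by nra. nra. }
     destruct (H (fun i => if Nat.eq_dec i p then t else y i)) as [e [Hin Hv]].
     assert (Hd : dot (Datatypes.S p) (fst e) (fun i => if Nat.eq_dec i p then t else y i) = dot p (fst e) y + fst e p * t).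
     { unfold dot. simpl. destruct Nat.eq_dec; [|lia]. f_equal. apply rsum_ext. intros. destruct Nat.eq_dec; [lia|auto]. }
     rewrite Hd in Hv. destruct (Ht e Hin) as [HP HQ].
     destruct (Rtotal_order (fst e p) 0) as [Hl|[He|Hg]].
     + specialize (HQ Hl). assert (snd e - dot p (fst e) y = ((snd e - dot p (fst e) y) / fst e p) * fst e p) by (field; lra).
       nra.
     + pose proof (Hsat e (elim_in1 p S e Hin He)). rewrite He in Hv. lra.
     + specialize (HP Hg). assert (snd e - dot p (fst e) y = ((snd e - dot p (fst e) y) / fst e p) * fst e p) by (field; lra).
       nra. }
   destruct (IH _ H') as [a [b [Hd [Hz Hb]]]]. exists a, b. split; [|split; auto].
   + apply (deriv_mono _ (elim p S)); auto. intros e He. destruct (elim_in p S e He) as [[Hi _]|[e1 [e2 [H1 [H2 [P1 [Q2 ->]]]]]]].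
     destruct e; constructor; auto.
     unfold comb; simpl. destruct e1 as [a1 b1], e2 as [a2 b2]; simpl in *. apply dv_add; apply dv_scal; try lra; constructor; auto.
   + intros i Hi. destruct (Nat.eq_dec i p). subst. apply (deriv_pres (elim p S)) with b; auto.
     intros e He. destruct (elim_in p S e He) as [[_ Hp]|[e1 [e2 [_ [_ [_ [_ ->]]]]]]]; auto.
     unfold comb, vadd, vscal; simpl. ring.
     apply Hz; lia.
Qed.

Lemma rsum_single n i f : (i < n)%nat -> rsum n (fun k => f k * (if Nat.eq_dec k i then 1 else 0)) = f i.
Proof. induction n; intros Hi; simpl; [lia|]. destruct (Nat.eq_dec n i).
 - subst. rewrite (rsum_ext _ _ (fun _ => 0)). rewrite rsum_zero. ring. intros. destruct Nat.eq_dec; [lia|ring].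
 - rewrite IHn by lia. ring. Qed.

Lemma fin_min n (C : nat -> R -> Prop) :
  (forall i, (i < n)%nat -> exists ti, 0 < ti /\ forall t, 0 < t <= ti -> C i t) ->
  exists t0, 0 < t0 /\ forall t, 0 < t <= t0 -> forall i, (i < n)%nat -> C i t.
Proof. induction n; intros H. exists 1. split. lra. intros; lia.
 destruct IHn as [t1 [Ht1 H1]]. intros; apply H; lia.
 destruct (H n) as [t2 [Ht2 H2]]. lia.
 exists (Rmin t1 t2). split. apply Rmin_pos; auto.
 intros t Ht i Hi. pose proof (Rmin_l t1 t2). pose proof (Rmin_r t1 t2).
 destruct (Nat.eq_dec i n). subst. apply H2. lra. apply H1. lra. lia.
Qed.

Lemma dot_neg m v y : dot m (vscal (-1) v) y = - dot m v y.
Proof. unfold dot, vscal. replace (- rsum m (fun i => v i * y i)) with ((-1) * rsum m (fun i => v i * y i)) by ring.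
 rewrite <- rsum_scal. apply rsum_ext; intros; ring. Qed.

Section KKTex.
Variables (m n : nat) (A : nat -> nat -> R) (b c : vec) (l u : nat -> option R) (x : vec).

Definition posb (i : nat) : bool := match u i with None => true | Some bb => if Rlt_dec (x i) bb then true else false end.
Definition negb' (i : nat) : bool := match l i with None => true | Some a => if Rlt_dec a (x i) then true else false end.
Definition col (i : nat) : vec := fun j => A j i.
Definition sys : list (vec * R) :=
  flat_map (fun i => (if posb i then [(col i, c i)] else []) ++
                     (if negb' i then [(vscal (-1) (col i), - c i)] else [])) (seq 0 n).

Definition Qd (a : vec) (be : R) : Prop :=
  exists d : vec, (forall i, (i < n)%nat -> (0 < d i -> posb i = true) /\ (d i < 0 -> negb' i = true)) /\
    (forall j, (j < m)%nat -> a j = mulA n A d j) /\ be = dot n c d.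

Lemma sys_in e : In e sys -> exists i, (i < n)%nat /\
   ((posb i = true /\ e = (col i, c i)) \/ (negb' i = true /\ e = (vscal (-1) (col i), - c i))).
Proof. unfold sys. rewrite in_flat_map. intros [i [Hi He]]. apply in_seq in Hi. exists i. split. lia.
 apply in_app_iff in He. destruct He as [He|He]; [left|right].
 destruct (posb i); simpl in He; try tauto; destruct He as [<-|[]]; auto.
 destruct (negb' i); simpl in He; try tauto; destruct He as [<-|[]]; auto. Qed.

Lemma sys_in1 i : (i < n)%nat -> posb i = true -> In (col i, c i) sys.
Proof. intros. unfold sys. apply in_flat_map. exists i. split. apply in_seq; lia.
 apply in_app_iff. left. rewrite H0. left; auto. Qed.
Lemma sys_in2 i : (i < n)%nat -> negb' i = true -> In (vscal (-1) (col i), - c i) sys.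
Proof. intros. unfold sys. apply in_flat_map. exists i. split. apply in_seq; lia.
 apply in_app_iff. right. rewrite H0. left; auto. Qed.

Lemma deriv_Qd a be : deriv sys a be -> Qd a be.
Proof. intros D. induction D as [a be Hin|a1 b1 a2 b2 D1 [d1 [S1 [A1 B1]]] D2 [d2 [S2 [A2 B2]]]|r a be Hr D [d [S1 [A1 B1]]]].
 - destruct (sys_in _ Hin) as [i [Hi [[Hp E]|[Hn E]]]]; injection E; intros -> ->.
   + exists (fun k => if Nat.eq_dec k i then 1 else 0). split.
     intros k Hk. destruct Nat.eq_dec. subst; split; auto; lra. split; lra.
     split. intros j Hj. unfold mulA, col. rewrite rsum_single; auto.
     unfold dot. rewrite rsum_single; auto.
   + exists (fun k => if Nat.eq_dec k i then -1 else 0). split.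
     intros k Hk. destruct Nat.eq_dec. subst; split; auto; lra. split; lra.
     split. intros j Hj. unfold mulA, col, vscal.
     rewrite (rsum_ext _ _ (fun k => (- A j k) * (if Nat.eq_dec k i then 1 else 0))). rewrite rsum_single; auto. ring.
     intros; destruct Nat.eq_dec; ring.
     unfold dot. rewrite (rsum_ext _ _ (fun k => (- c k) * (if Nat.eq_dec k i then 1 else 0))). rewrite rsum_single; auto.
     intros; destruct Nat.eq_dec; ring.
 - exists (vadd d1 d2). split.
   intros i Hi. destruct (S1 i Hi), (S2 i Hi). unfold vadd. split; intros.
   destruct (Rlt_dec 0 (d1 i)); auto. destruct (Rlt_dec 0 (d2 i)); auto. lra.
   destruct (Rlt_dec (d1 i) 0); auto. destruct (Rlt_dec (d2 i) 0); auto. lra.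
   split. intros j Hj. unfold vadd at 1. rewrite A1, A2 by auto. unfold mulA, vadd. rewrite <- rsum_plus. apply rsum_ext; intros; ring.
   subst. unfold dot, vadd. rewrite <- rsum_plus. apply rsum_ext; intros; ring.
 - exists (vscal r d). split.
   intros i Hi. destruct (S1 i Hi). unfold vscal. split; intros.
   apply H. destruct (Rlt_dec 0 (d i)); auto. nra. apply H0. destruct (Rlt_dec (d i) 0); auto. nra.
   split. intros j Hj. unfold vscal at 1. rewrite A1 by auto. unfold mulA, vscal. rewrite <- rsum_scal. apply rsum_ext; intros; ring.
   subst. unfold dot, vscal. rewrite <- rsum_scal. apply rsum_ext; intros; ring.
Qed.

Lemma KKT_exists : P_optimal m n A b c l u x -> exists y, KKT m n A b c l u y x.
Proof. intros [[HK HA] Hopt].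
 assert (Hfeas : exists y, forall e, In e sys -> dot m (fst e) y <= snd e).
 { apply NNPP. intros Hc.
   assert (Hinf : forall y, exists e, In e sys /\ dot m (fst e) y > snd e).
   { intros y. apply NNPP. intros Hy. apply Hc. exists y. intros e He. apply Rnot_lt_le. intros Hlt. apply Hy. exists e. split; auto. }
   destruct (FM m sys Hinf) as [a [be [D [Ha Hbe]]]].
   destruct (deriv_Qd a be D) as [d [Sd [Ad Bd]]].
   destruct (fin_min n (fun i t => (match l i with Some a0 => a0 <= x i + t * d i | None => True end) /\
                              (match u i with Some b0 => x i + t * d i <= b0 | None => True end))) as [t0 [Ht0 Hall]].
   { intros i Hi. destruct (HK i Hi) as [Hl Hu]. destruct (Sd i Hi) as [Sp Sn].
     destruct (Rtotal_order (d i) 0) as [Hneg|[Hz|Hpos]].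
     - specialize (Sn Hneg). unfold negb' in Sn.
       destruct (l i) as [a0|] eqn:El.
       + destruct Rlt_dec as [Hlt|]; [|discriminate].
         exists ((x i - a0) / (- d i)). split. apply Rdiv_lt_0_compat; lra.
         intros t [Ht1 Ht2]. split.
         assert (t * (- d i) <= x i - a0). { apply Rmult_le_reg_r with (/ (- d i)). apply Rinv_0_lt_compat; lra.
           rewrite Rmult_assoc, Rinv_r by lra. unfold Rdiv in Ht2. lra. } lra.
         destruct (u i); auto. nra.
       + exists 1. split. lra. intros t Ht. split; auto. destruct (u i); auto. nra.
     - exists 1. split. lra. intros. rewrite Hz. rewrite Rmult_0_r, Rplus_0_r. auto.
     - specialize (Sp Hpos). unfold posb in Sp.
       destruct (u i) as [b0|] eqn:Eu.
       + destruct Rlt_dec as [Hlt|]; [|discriminate].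
         exists ((b0 - x i) / d i). split. apply Rdiv_lt_0_compat; lra.
         intros t [Ht1 Ht2]. split.
         destruct (l i); auto. nra.
         assert (t * d i <= b0 - x i). { apply Rmult_le_reg_r with (/ d i). apply Rinv_0_lt_compat; lra.
           rewrite Rmult_assoc, Rinv_r by lra. unfold Rdiv in Ht2. lra. } lra.
       + exists 1. split. lra. intros t Ht. split; auto. destruct (l i); auto. nra. }
   set (x' := vadd x (vscal t0 d)).
   assert (Hf : P_feasible m n A b l u x').
   { split. intros i Hi. apply (Hall t0); auto. lra.
     intros j Hj. unfold x'. unfold mulA, vadd, vscal.
     rewrite (rsum_ext _ _ (fun k => A j k * x k + t0 * (A j k * d k))) by (intros; ring).
     rewrite rsum_plus, rsum_scal. fold (mulA n A x j) (mulA n A d j). rewrite <- Ad, Ha, HA by auto. ring. }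
   specialize (Hopt x' Hf).
   assert (dot n c x' = dot n c x + t0 * dot n c d).
   { unfold x', dot, vadd, vscal. rewrite <- rsum_scal, <- rsum_plus. apply rsum_ext; intros; ring. }
   nra. }
 destruct Hfeas as [y Hy]. exists y. split; auto. split; auto.
 intros w Hw. apply rsum_nonpos. intros i Hi. unfold vsub.
 assert (Hz : dot m (col i) y = mulAt m A y i) by (unfold dot, col, mulAt; auto).
 destruct (HK i Hi) as [Hl Hu]. destruct (Hw i Hi) as [Hwl Hwu].
 destruct (posb i) eqn:Ep; destruct (negb' i) eqn:En.
 - pose proof (Hy _ (sys_in1 i Hi Ep)). pose proof (Hy _ (sys_in2 i Hi En)). simpl in *.
   assert (dot m (vscal (-1) (col i)) y = - dot m (col i) y) by apply dot_neg.
   assert (mulAt m A y i - c i = 0) by lra. rewrite H2. lra.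
 - pose proof (Hy _ (sys_in1 i Hi Ep)). simpl in *. unfold negb' in En.
   destruct (l i) as [a0|]; [|discriminate]. destruct Rlt_dec; [discriminate|]. nra.
 - pose proof (Hy _ (sys_in2 i Hi En)). simpl in *. unfold posb in Ep.
   assert (dot m (vscal (-1) (col i)) y = - dot m (col i) y) by apply dot_neg.
   destruct (u i) as [b0|]; [|discriminate]. destruct Rlt_dec; [discriminate|]. nra.
 - unfold posb in Ep. unfold negb' in En.
   destruct (u i) as [b0|]; [|discriminate]. destruct Rlt_dec; [discriminate|].
   destruct (l i) as [a0|]; [|discriminate]. destruct Rlt_dec; [discriminate|].
   assert (w i - x i = 0) by lra. rewrite H. lra.
Qed.
End KKTex.

Definition incr (phi : nat -> nat) := forall k, (phi k < phi (S k))%nat.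

Lemma incr_ge phi : incr phi -> forall k, (k <= phi k)%nat.
Proof. intros H k. induction k. lia. specialize (H k). lia. Qed.

Lemma incr_mono phi : incr phi -> forall j k, (j <= k)%nat -> (phi j <= phi k)%nat.
Proof. intros H j k Hjk. induction Hjk. lia. specialize (H m). lia. Qed.

Lemma incr_comp phi psi : incr phi -> incr psi -> incr (fun k => phi (psi k)).
Proof. intros H1 H2 k. specialize (H2 k).
 assert (phi (S (psi k)) <= phi (psi (S k)))%nat by (apply incr_mono; auto).
 specialize (H1 (psi k)). lia. Qed.

Lemma cv_sub v L psi : Un_cv v L -> incr psi -> Un_cv (fun k => v (psi k)) L.
Proof. intros H Hp e He. destruct (H e He) as [N HN]. exists N. intros k Hk. apply HN.
 pose proof (incr_ge psi Hp k). lia. Qed.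

Lemma lim_ge v L a : Un_cv v L -> (forall k, a <= v k) -> a <= L.
Proof. intros H Ha. apply Rnot_lt_le. intros Hlt. destruct (H (a - L)) as [N HN]. lra.
 specialize (HN N (le_n _)). specialize (Ha N). unfold R_dist in HN. apply Rabs_def2 in HN. lra. Qed.

Lemma lim_le v L a : Un_cv v L -> (forall k, v k <= a) -> L <= a.
Proof. intros H Ha. apply Rnot_lt_le. intros Hlt. destruct (H (L - a)) as [N HN]. lra.
 specialize (HN N (le_n _)). specialize (Ha N). unfold R_dist in HN. apply Rabs_def2 in HN. lra. Qed.

Lemma squeeze0 v w : (forall k, Rabs (v k) <= w k) -> Un_cv w 0 -> Un_cv v 0.
Proof. intros H Hw e He. destruct (Hw e He) as [N HN]. exists N. intros k Hk.
 specialize (HN k Hk). specialize (H k). unfold R_dist in *. rewrite Rminus_0_r in *.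
 apply Rle_lt_trans with (w k). auto. apply Rabs_def2 in HN. lra. Qed.

Lemma summable_to0 a B : (forall k, 0 <= a k) -> (forall k, rsum k a <= B) -> Un_cv a 0.
Proof. intros H0 HB.
 destruct (growing_cv (fun k => rsum k a)) as [L HL].
 { intros k. simpl. specialize (H0 k). lra. }
 { exists B. intros r [k ->]. auto. }
 assert (Un_cv (fun k => rsum (S k) a - rsum k a) (L - L)).
 { apply CV_minus; auto. intros e He. destruct (HL e He) as [N HN]. exists N. intros; apply HN; lia. }
 rewrite Rminus_diag in H. intros e He. destruct (H e He) as [N HN]. exists N. intros k Hk.
 specialize (HN k Hk). simpl in HN. replace (rsum k a + a k - rsum k a) with (a k) in HN by ring. auto. Qed.

Lemma BW1 (v : nat -> R) M : (forall k, Rabs (v k) <= M) ->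
  exists psi, incr psi /\ exists L, Un_cv (fun k => v (psi k)) L.
Proof. intros HM.
 destruct (Bolzano_Weierstrass v (fun c => -M <= c <= M) (compact_P3 (-M) M)) as [L HL].
 { intros k. specialize (HM k). pose proof (Rle_abs (v k)). pose proof (Rle_abs (- v k)). rewrite Rabs_Ropp in H0. lra. }
 assert (Hj : forall N j, exists p, (N <= p)%nat /\ Rabs (v p - L) < / (INR j + 1)).
 { intros N j. assert (Hp : 0 < / (INR j + 1)) by (apply Rinv_0_lt_compat; pose proof (pos_INR j); lra).
   destruct (HL (disc L (mkposreal _ Hp)) N) as [p [Hp1 Hp2]].
   exists (mkposreal _ Hp). intros z Hz. auto.
   exists p. split; auto. }
 set (g := fun N j => proj1_sig (constructive_indefinite_description _ (Hj N j))).
 assert (Hg : forall N j, (N <= g N j)%nat /\ Rabs (v (g N j) - L) < / (INR j + 1)).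
 { intros. unfold g. destruct constructive_indefinite_description. auto. }
 set (phi := fix phi k := match k with O => g O O | S k' => g (S (phi k')) k end).
 exists phi. split.
 - intros k. simpl. destruct (Hg (S (phi k)) (S k)). lia.
 - exists L. intros e He. destruct (archimed (/ e)) as [Ha _].
   assert (0 <= IZR (up (/ e))). { pose proof (Rinv_0_lt_compat e He). lra. }
   exists (Z.to_nat (up (/ e))). intros k Hk. unfold R_dist.
   assert (Hb : Rabs (v (phi k) - L) < / (INR k + 1)).
   { destruct k; simpl; apply Hg. }
   apply Rlt_le_trans with (/ (INR k + 1)); auto.
   assert (INR (Z.to_nat (up (/ e))) <= INR k) by (apply le_INR; auto).
   rewrite INR_IZR_INZ, Z2Nat.id in H0. 2: { apply le_IZR. auto. }
   rewrite <- (Rinv_inv e). apply Rinv_le_contravar. apply Rinv_0_lt_compat; auto. lra.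
Qed.

Lemma BWd d (v : nat -> vec) M : (forall k i, (i < d)%nat -> Rabs (v k i) <= M) ->
  exists psi, incr psi /\ exists L : vec, forall i, (i < d)%nat -> Un_cv (fun k => v (psi k) i) (L i).
Proof. induction d; intros HM.
 - exists (fun k => k). split. intros k; lia. exists (fun _ => 0). intros; lia.
 - destruct IHd as [phi [Hphi [L HL]]]. intros; apply HM; lia.
   destruct (BW1 (fun k => v (phi k) d) M) as [psi [Hpsi [Ld HLd]]]. intros; apply HM; lia.
   exists (fun k => phi (psi k)). split. apply incr_comp; auto.
   exists (fun i => if Nat.eq_dec i d then Ld else L i). intros i Hi.
   destruct Nat.eq_dec. subst. auto.
   apply (cv_sub (fun k => v (phi k) i)). apply HL; lia. auto.
Qed.

Lemma Rdiv_le_0_compat a b : 0 <= a -> 0 < b -> 0 <= a / b.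
Proof. intros. unfold Rdiv. apply Rmult_le_pos; auto. left; apply Rinv_0_lt_compat; auto. Qed.

Lemma CV_const a : Un_cv (fun _ => a) a.
Proof. intros e He. exists 0%nat. intros. unfold R_dist. rewrite Rminus_diag, Rabs_R0. auto. Qed.

Lemma CV_scal a w L : Un_cv w L -> Un_cv (fun k => a * w k) (a * L).
Proof. intros. apply CV_mult; auto. apply CV_const. Qed.

Lemma sq_squeeze v w : (forall k, v k * v k <= w k) -> Un_cv w 0 -> Un_cv v 0.
Proof. intros H Hw e He. assert (Hee : e * e > 0) by nra. destruct (Hw _ Hee) as [N HN]. exists N. intros k Hk.
 specialize (HN k Hk). specialize (H k). unfold R_dist in *. rewrite Rminus_0_r in *.
 apply Rabs_def2 in HN. destruct HN. apply Rabs_def1; nra. Qed.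

Lemma comp_sq_le m v j : (j < m)%nat -> v j * v j <= dot m v v.
Proof. intros. unfold dot. apply (rsum_term_le m (fun i => v i * v i)); auto. intros; nra. Qed.

Section Main.
Variables (m n : nat) (A : nat -> nat -> R) (b c : vec) (l u : nat -> option R)
  (sigma tau eps : nat -> R) (tau_inf : R) (x y : nat -> vec).
Hypothesis Hsig0 : 0 < sigma 0%nat.
Hypothesis Hsig_mon : forall k, sigma k <= sigma (S k).
Hypothesis Htau_pos : forall k, 0 < tau k.
Hypothesis Htau_mon : forall k, tau (S k) <= tau k.
Hypothesis Htau_lim : Un_cv tau tau_inf.
Hypothesis Htau_inf : 0 < tau_inf.
Hypothesis Heps_pos : forall k, 0 <= eps k.
Hypothesis Hstop : forall k,
     vnorm m (grad_psi m n A b c l u (sigma k) (tau k) (x k) (y k) (y (S k)))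
       <= Rmin (sqrt (tau k)) 1 / sigma k * eps k.
Hypothesis Hx : forall k,
     x (S k) = projK l u (vsub (x k) (vscal (sigma k) (vsub c (mulAt m A (y (S k)))))).
Variable x0 : vec.
Hypothesis HK0 : inK n l u x0.

Lemma sig_ge0 k : sigma 0 <= sigma k.
Proof. induction k. lra. specialize (Hsig_mon k). lra. Qed.
Lemma sig_pos k : 0 < sigma k.
Proof. pose proof (sig_ge0 k). lra. Qed.
Lemma tau_le0 k : tau k <= tau 0.
Proof. induction k. lra. specialize (Htau_mon k). lra. Qed.
Lemma tau_mono i j : (i <= j)%nat -> tau j <= tau i.
Proof. induction 1. lra. specialize (Htau_mon m0). lra. Qed.
Lemma tau_geinf k : tau_inf <= tau k.
Proof. apply Rnot_lt_le. intros Hlt. assert (Hp : tau_inf - tau k > 0) by lra. destruct (Htau_lim _ Hp) as [N HN].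
 specialize (HN (max N k) (Nat.le_max_l _ _)). pose proof (tau_mono k (max N k) (Nat.le_max_r _ _)).
 unfold R_dist in HN. apply Rabs_def2 in HN. lra. Qed.

Definition W k : vec := vadd (x k) (vscal (sigma k) (vsub (mulAt m A (y (S k))) c)).
Lemma Hx' k : x (S k) = projK l u (W k).
Proof. rewrite Hx. f_equal. apply functional_extensionality. intros i. unfold W, vadd, vsub, vscal. ring. Qed.

Definition delta k : vec := grad_psi m n A b c l u (sigma k) (tau k) (x k) (y k) (y (S k)).
Lemma delta_eq k j : delta k j = - b j + mulA n A (x (S k)) j + tau k / sigma k * (y (S k) j - y k j).
Proof. assert (E : vadd (x k) (vscal (sigma k) (vsub (mulAt m A (y (S k))) c)) = vsub (x k) (vscal (sigma k) (vsub c (mulAt m A (y (S k)))))) by (apply functional_extensionality; intros i; unfold vadd, vscal, vsub; ring).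
 unfold delta, grad_psi. rewrite E, <- Hx. unfold vadd, vscal, vsub. cbv beta. ring. Qed.

Lemma xK k : inK n l u (x (S k)).
Proof. rewrite Hx'. apply (proj_in n l u x0); auto. Qed.

Lemma delta_bound k : vnorm m (delta k) <= eps k / sigma 0.
Proof. eapply Rle_trans. apply Hstop. pose proof (sig_pos k). pose proof (sig_ge0 k).
 pose proof (Rmin_r (sqrt (tau k)) 1). pose proof (Rmin_glb_lt 0 (sqrt (tau k)) 1).
 assert (0 <= Rmin (sqrt (tau k)) 1). { unfold Rmin. destruct Rle_dec. apply sqrt_pos. lra. }
 pose proof (Heps_pos k).
 unfold Rdiv. apply Rle_trans with (/ sigma k * eps k). 
 rewrite Rmult_assoc. rewrite <- (Rmult_1_l (/ sigma k * eps k)) at 2. apply Rmult_le_compat_r; auto.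
 apply Rmult_le_pos; auto. left; apply Rinv_0_lt_compat; auto.
 rewrite Rmult_comm. apply Rmult_le_compat_l; auto. apply Rinv_le_contravar; auto. Qed.

(* Fejer for a KKT point *)
Definition Phi (yb xb : vec) (t : R) (yy xx : vec) : R :=
  t * dot m (vsub yy yb) (vsub yy yb) + dot n (vsub xx xb) (vsub xx xb).
Definition Dk k : R :=
  tau k * dot m (vsub (y (S k)) (y k)) (vsub (y (S k)) (y k)) + dot n (vsub (x (S k)) (x k)) (vsub (x (S k)) (x k)).

Lemma Dk_nonneg k : 0 <= Dk k.
Proof. unfold Dk. pose proof (dot_nonneg m (vsub (y (S k)) (y k))). pose proof (dot_nonneg n (vsub (x (S k)) (x k))).
 pose proof (Htau_pos k). nra. Qed.

Lemma Phi_nonneg yb xb t yy xx : 0 <= t -> 0 <= Phi yb xb t yy xx.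
Proof. unfold Phi. intros. pose proof (dot_nonneg m (vsub yy yb)). pose proof (dot_nonneg n (vsub xx xb)). nra. Qed.

Lemma fejer_main yb xb : KKT m n A b c l u yb xb -> forall k,
  Phi yb xb (tau k) (y (S k)) (x (S k)) + Dk k <=
  Phi yb xb (tau k) (y k) (x k) + 2 * eps k * sqrt (Phi yb xb (tau k) (y (S k)) (x (S k))).
Proof. intros [HKb [HAb HNb]] k.
 set (X1 := x (S k)). set (X0 := x k). set (Y1 := y (S k)). set (Y0 := y k). set (s := sigma k). set (t := tau k).
 assert (Hs : 0 < s) by apply sig_pos. assert (Ht : 0 < t) by apply Htau_pos.
 pose proof (proj_dot n l u (W k) xb HKb) as P1. rewrite <- Hx' in P1. fold X1 in P1.
 pose proof (HNb X1 (xK k)) as K1.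
 set (SX := rsum n (fun i => (X0 i - X1 i) * (xb i - X1 i))).
 set (T := rsum n (fun i => (mulAt m A Y1 i - mulAt m A yb i) * (X1 i - xb i))).
 assert (E1 : dot n (vsub (W k) X1) (vsub xb X1) = SX - s * T - s * dot n (vsub (mulAt m A yb) c) (vsub X1 xb)).
 { unfold SX, T, dot, W, vadd, vscal, vsub. rewrite <- !rsum_scal, <- !rsum_minus. apply rsum_ext. intros. fold X0 Y1 s. ring. }
 assert (SXT : SX <= s * T) by nra.
 set (SY := rsum m (fun j => (Y1 j - yb j) * (Y1 j - Y0 j))).
 assert (ET : T = dot m (vsub Y1 yb) (delta k) - t / s * SY).
 { transitivity (dot n (mulAt m A (vsub Y1 yb)) (vsub X1 xb)).
   unfold T, dot. apply rsum_ext. intros. unfold mulAt, vsub. f_equal. rewrite <- rsum_minus. apply rsum_ext; intros; ring.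
   rewrite adjoint. unfold SY, dot. rewrite <- rsum_scal, <- rsum_minus. apply rsum_ext. intros j Hj.
   rewrite mulA_sub, HAb by auto. rewrite delta_eq. fold X1 Y1 Y0 t s. unfold vsub. ring. }
 assert (HX : 2 * SX = dot n (vsub X1 X0) (vsub X1 X0) + dot n (vsub X1 xb) (vsub X1 xb) - dot n (vsub X0 xb) (vsub X0 xb)).
 { unfold SX, dot, vsub. rewrite <- rsum_scal, <- rsum_plus, <- rsum_minus. apply rsum_ext; intros; ring. }
 assert (HY : 2 * SY = dot m (vsub Y1 Y0) (vsub Y1 Y0) + dot m (vsub Y1 yb) (vsub Y1 yb) - dot m (vsub Y0 yb) (vsub Y0 yb)).
 { unfold SY, dot, vsub. rewrite <- rsum_scal, <- rsum_plus, <- rsum_minus. apply rsum_ext; intros; ring. }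
 assert (Hmain : SX + t * SY <= s * dot m (vsub Y1 yb) (delta k)).
 { rewrite ET in SXT. replace (s * (dot m (vsub Y1 yb) (delta k) - t / s * SY)) with (s * dot m (vsub Y1 yb) (delta k) - t * SY) in SXT by (field; lra). lra. }
 assert (Hcs : s * dot m (vsub Y1 yb) (delta k) <= eps k * sqrt (Phi yb xb t Y1 X1)).
 { pose proof (CS m (vsub Y1 yb) (delta k)). pose proof (delta_bound k).
   pose proof (Hstop k). fold (delta k) in H1. fold s t in H1.
   pose proof (vnorm_nonneg m (vsub Y1 yb)). pose proof (vnorm_nonneg m (delta k)).
   assert (Hr : 0 <= Rmin (sqrt t) 1 <= sqrt t). { split. unfold Rmin. destruct Rle_dec. apply sqrt_pos. lra. apply Rmin_l. }
   assert (s * vnorm m (delta k) <= sqrt t * eps k).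
   { apply Rle_trans with (s * (Rmin (sqrt t) 1 / s * eps k)). apply Rmult_le_compat_l; lra.
     replace (s * (Rmin (sqrt t) 1 / s * eps k)) with (Rmin (sqrt t) 1 * eps k) by (field; lra).
     apply Rmult_le_compat_r. apply Heps_pos. lra. }
   assert (sqrt t * vnorm m (vsub Y1 yb) <= sqrt (Phi yb xb t Y1 X1)).
   { unfold vnorm. rewrite <- sqrt_mult by (lra || apply dot_nonneg). apply sqrt_le_1_alt.
     unfold Phi. pose proof (dot_nonneg n (vsub X1 xb)). lra. }
   pose proof (Heps_pos k). pose proof (sqrt_pos t).
   apply Rle_trans with (vnorm m (vsub Y1 yb) * (s * vnorm m (delta k))). nra.
   apply Rle_trans with (vnorm m (vsub Y1 yb) * (sqrt t * eps k)). apply Rmult_le_compat_l; auto. nra. }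
 unfold Phi, Dk. fold X1 X0 Y1 Y0 t. fold t in Hcs. unfold Phi in Hcs.
 assert (dot n (vsub X1 X0) (vsub X1 X0) = dot n (vsub X1 X0) (vsub X1 X0)) by auto.
 nra.
Qed.

Variable E : R.
Hypothesis HE : forall k, rsum k eps <= E.

Definition Rk (yb xb : vec) k := sqrt (Phi yb xb (tau k) (y k) (x k)).

Lemma Rk_nonneg yb xb k : 0 <= Rk yb xb k.
Proof. apply sqrt_pos. Qed.

Lemma sqrt_Phi_sq yb xb t yy xx : 0 <= t -> sqrt (Phi yb xb t yy xx) * sqrt (Phi yb xb t yy xx) = Phi yb xb t yy xx.
Proof. intros. apply sqrt_sqrt. apply Phi_nonneg; auto. Qed.

Lemma step yb xb : KKT m n A b c l u yb xb -> forall k,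
  Rk yb xb (S k) <= sqrt (Phi yb xb (tau k) (y (S k)) (x (S k))) /\
  sqrt (Phi yb xb (tau k) (y (S k)) (x (S k))) <= Rk yb xb k + 2 * eps k /\
  Dk k <= Rk yb xb k * Rk yb xb k - Rk yb xb (S k) * Rk yb xb (S k) + 2 * eps k * (Rk yb xb k + 2 * eps k).
Proof. intros HK k. pose proof (fejer_main yb xb HK k) as F.
 set (s1 := sqrt (Phi yb xb (tau k) (y (S k)) (x (S k)))).
 pose proof (sqrt_Phi_sq yb xb (tau k) (y (S k)) (x (S k))) as Q1. fold s1 in Q1.
 pose proof (sqrt_Phi_sq yb xb (tau k) (y k) (x k)) as Q0. fold (Rk yb xb k) in Q0.
 pose proof (sqrt_Phi_sq yb xb (tau (S k)) (y (S k)) (x (S k))) as Q2. fold (Rk yb xb (S k)) in Q2.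
 pose proof (Htau_pos k) as T0. pose proof (Htau_pos (S k)) as T1. pose proof (Htau_mon k) as T2.
 assert (Hle : Rk yb xb (S k) <= s1).
 { unfold Rk, s1. apply sqrt_le_1_alt. unfold Phi. pose proof (dot_nonneg m (vsub (y (S k)) yb)). nra. }
 pose proof (Dk_nonneg k). pose proof (Heps_pos k). pose proof (Rk_nonneg yb xb k). pose proof (Rk_nonneg yb xb (S k)).
 assert (0 <= s1) by apply sqrt_pos.
 assert (F' : s1 * s1 + Dk k <= Rk yb xb k * Rk yb xb k + 2 * eps k * s1) by (rewrite Q1, Q0 by lra; exact F).
 clear F. rename F' into F.
 assert (Hs : s1 <= Rk yb xb k + 2 * eps k).
 { apply Rnot_lt_le. intros Hc. assert (s1 * (s1 - 2 * eps k) > (Rk yb xb k + 2 * eps k) * Rk yb xb k).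
   { apply Rle_lt_trans with ((Rk yb xb k + 2 * eps k) * (s1 - 2 * eps k)). apply Rmult_le_compat_l; lra.
     apply Rmult_lt_compat_r; lra. } nra. }
 split; auto. split; auto.
 assert (Rk yb xb (S k) * Rk yb xb (S k) <= s1 * s1) by (apply Rmult_le_compat; lra).
 assert (eps k * s1 <= eps k * (Rk yb xb k + 2 * eps k)) by (apply Rmult_le_compat_l; lra).
 lra. Qed.

Lemma fejer_gen yb xb : KKT m n A b c l u yb xb -> forall i j, (i <= j)%nat ->
  Rk yb xb j <= Rk yb xb i + 2 * (rsum j eps - rsum i eps).
Proof. intros HK i j Hij. induction Hij. lra. destruct (step yb xb HK m0) as [S1 [S2 _]].
 simpl. lra. Qed.

Lemma eps_le k : eps k <= E.
Proof. pose proof (HE (S k)). simpl in H. assert (0 <= rsum k eps) by (apply rsum_nonneg; auto). lra. Qed.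

Lemma Rk_bound yb xb : KKT m n A b c l u yb xb -> forall k, Rk yb xb k <= Rk yb xb 0 + 2 * E.
Proof. intros HK k. pose proof (fejer_gen yb xb HK 0 k (Nat.le_0_l k)). simpl in H. pose proof (HE k). lra. Qed.

Lemma Dk_sum yb xb : KKT m n A b c l u yb xb -> forall K,
  rsum K Dk <= Rk yb xb 0 * Rk yb xb 0 + 2 * E * (Rk yb xb 0 + 4 * E).
Proof. intros HK. set (B := Rk yb xb 0 + 2 * E).
 assert (H : forall K, rsum K Dk <= Rk yb xb 0 * Rk yb xb 0 - Rk yb xb K * Rk yb xb K + 2 * (B + 2 * E) * rsum K eps).
 { induction K. simpl. lra. simpl. destruct (step yb xb HK K) as [_ [_ S3]].
   pose proof (Rk_bound yb xb HK K). fold B in H. pose proof (eps_le K). pose proof (Heps_pos K).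
   assert (eps K * (Rk yb xb K + 2 * eps K) <= eps K * (B + 2 * E)) by (apply Rmult_le_compat_l; lra). nra. }
 intros K. specialize (H K). pose proof (HE K). assert (0 <= rsum K eps) by (apply rsum_nonneg; auto).
 assert (0 <= E) by lra. pose proof (Rk_nonneg yb xb 0).
 assert (2 * (B + 2 * E) * rsum K eps <= 2 * (B + 2 * E) * E) by (apply Rmult_le_compat_l; unfold B; lra).
 unfold B in *. nra. Qed.

Lemma Dk_to0 yb xb : KKT m n A b c l u yb xb -> Un_cv Dk 0.
Proof. intros HK. apply (summable_to0 _ _ Dk_nonneg (Dk_sum yb xb HK)). Qed.

Lemma eps_to0 : Un_cv eps 0.
Proof. apply (summable_to0 _ _ Heps_pos HE). Qed.

Hypothesis HEtail : forall e, e > 0 -> exists N, forall k, (N <= k)%nat -> E - rsum k eps < e.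

Lemma bounded_iter yb xb : KKT m n A b c l u yb xb -> forall k,
  vnorm m (vsub (y k) yb) <= (Rk yb xb 0 + 2 * E) / sqrt tau_inf /\ vnorm n (vsub (x k) xb) <= Rk yb xb 0 + 2 * E.
Proof. intros HK k. pose proof (Rk_bound yb xb HK k). pose proof (Rk_nonneg yb xb k).
 pose proof (sqrt_Phi_sq yb xb (tau k) (y k) (x k)) as Q. fold (Rk yb xb k) in Q.
 pose proof (Htau_pos k). specialize (Q ltac:(lra)). pose proof (tau_geinf k).
 pose proof (dot_nonneg m (vsub (y k) yb)). pose proof (dot_nonneg n (vsub (x k) xb)).
 unfold Phi in Q. set (B := Rk yb xb 0 + 2 * E) in *.
 assert (Rk yb xb k * Rk yb xb k <= B * B) by (apply Rmult_le_compat; lra).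
 pose proof (sqrt_lt_R0 _ Htau_inf) as Sq0. pose proof (sqrt_sqrt _ (Rlt_le _ _ Htau_inf)) as Sq.
 split; apply vnorm_le_sqrt.
 - apply Rdiv_le_0_compat; lra.
 - replace (B / sqrt tau_inf * (B / sqrt tau_inf)) with (B * B / (sqrt tau_inf * sqrt tau_inf)) by (field; lra). rewrite Sq.
   apply Rmult_le_reg_l with tau_inf. lra. replace (tau_inf * (B * B / tau_inf)) with (B * B) by (field; lra). nra.
 - lra.
 - nra.
Qed.

Lemma cluster_KKT yb xb theta ys xs : KKT m n A b c l u yb xb -> incr theta ->
  (forall i, (i < n)%nat -> Un_cv (fun k => x (S (theta k)) i) (xs i)) ->
  (forall j, (j < m)%nat -> Un_cv (fun k => y (S (theta k)) j) (ys j)) ->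
  KKT m n A b c l u ys xs.
Proof. intros HK Hth Hxs Hys.
 pose proof (Dk_to0 yb xb HK) as HD. pose proof eps_to0 as He0.
 assert (HDy : forall k j, (j < m)%nat -> tau_inf * ((y (S k) j - y k j) * (y (S k) j - y k j)) <= Dk k).
 { intros k j Hj. unfold Dk. pose proof (comp_sq_le m (vsub (y (S k)) (y k)) j Hj). unfold vsub at 1 2 in H.
   pose proof (tau_geinf k). pose proof (dot_nonneg n (vsub (x (S k)) (x k))). pose proof (Htau_pos k).
   pose proof (Rle_0_sqr (y (S k) j - y k j)) as Hsq. unfold Rsqr in Hsq.
   apply Rle_trans with (tau k * ((y (S k) j - y k j) * (y (S k) j - y k j))). apply Rmult_le_compat_r; lra.
   apply Rle_trans with (tau k * dot m (vsub (y (S k)) (y k)) (vsub (y (S k)) (y k))). apply Rmult_le_compat_l; lra. lra. }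
 assert (HDx : forall k i, (i < n)%nat -> (x (S k) i - x k i) * (x (S k) i - x k i) <= Dk k).
 { intros k i Hi. unfold Dk. pose proof (comp_sq_le n (vsub (x (S k)) (x k)) i Hi). unfold vsub at 1 2 in H.
   pose proof (dot_nonneg m (vsub (y (S k)) (y k))). pose proof (Htau_pos k). nra. }
 split; [|split].
 - intros i Hi. split.
   + destruct (l i) as [a|] eqn:El; auto. apply (lim_ge _ _ a (Hxs i Hi)). intros k. destruct (xK (theta k) i Hi) as [H1 _]. rewrite El in H1. auto.
   + destruct (u i) as [a|] eqn:El; auto. apply (lim_le _ _ a (Hxs i Hi)). intros k. destruct (xK (theta k) i Hi) as [_ H1]. rewrite El in H1. auto.
 - intros j Hj.
   assert (Hr : Un_cv (fun k => mulA n A (x (S k)) j - b j) 0).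
   { assert (Hd : Un_cv (fun k => delta k j) 0).
     { apply sq_squeeze with (fun k => (eps k / sigma 0) * (eps k / sigma 0)).
       intros k. eapply Rle_trans. apply comp_sq_le; eauto. rewrite <- vnorm_sq.
       pose proof (delta_bound k). pose proof (vnorm_nonneg m (delta k)). apply Rmult_le_compat; auto.
       replace 0 with ((0 / sigma 0) * (0 / sigma 0)) by (field; lra). apply CV_mult; unfold Rdiv; apply CV_mult; auto; apply CV_const. }
     assert (Hy2 : Un_cv (fun k => tau k / sigma k * (y (S k) j - y k j)) 0).
     { apply sq_squeeze with (fun k => (tau 0 / sigma 0) * (tau 0 / sigma 0) / tau_inf * Dk k).
       intros k. pose proof (HDy k j Hj). pose proof (Htau_pos k). pose proof (tau_le0 k). pose proof (sig_pos k). pose proof (sig_ge0 k).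
       assert (0 <= tau k / sigma k <= tau 0 / sigma 0).
       { split. apply Rdiv_le_0_compat; lra. unfold Rdiv. apply Rmult_le_compat; try lra. left; apply Rinv_0_lt_compat; lra.
         apply Rinv_le_contravar; lra. }
       set (d := y (S k) j - y k j) in *. set (q := tau 0 / sigma 0) in *.
       assert (d * d <= Dk k / tau_inf). { apply Rmult_le_reg_l with tau_inf. lra. replace (tau_inf * (Dk k / tau_inf)) with (Dk k) by (field; lra). lra. }
       assert (0 <= d * d) by nra.
       replace (q * q / tau_inf * Dk k) with (q * q * (Dk k / tau_inf)) by (field; lra).
       replace (tau k / sigma k * d * (tau k / sigma k * d)) with ((tau k / sigma k) * (tau k / sigma k) * (d * d)) by ring.
       apply Rmult_le_compat; [nra| lra | apply Rmult_le_compat; lra | lra].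
       replace 0 with ((tau 0 / sigma 0) * (tau 0 / sigma 0) / tau_inf * 0) by ring. apply CV_scal. auto. }
     replace 0 with (0 - 0) by ring.
     assert (Un_cv (fun k => delta k j - tau k / sigma k * (y (S k) j - y k j)) (0 - 0)) by (apply CV_minus; auto).
     intros e He'. destruct (H e He') as [N HN]. exists N. intros k Hk. specialize (HN k Hk).
     rewrite delta_eq in HN. replace (mulA n A (x (S k)) j - b j) with (- b j + mulA n A (x (S k)) j + tau k / sigma k * (y (S k) j - y k j) - tau k / sigma k * (y (S k) j - y k j)) by ring. auto. }
   pose proof (cv_sub _ _ theta Hr Hth) as Hr'. simpl in Hr'.
   assert (Hm : Un_cv (fun k => mulA n A (x (S (theta k))) j - b j) (mulA n A xs j - b j)).
   { apply CV_minus. unfold mulA. apply (rsum_cv n (fun k i => A j i * x (S (theta k)) i) (fun i => A j i * xs i)).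
     intros i Hi. apply CV_mult. apply CV_const. auto. apply CV_const. }
   pose proof (UL_sequence _ _ _ Hm Hr'). lra.
 - intros w Hw.
   assert (Hg : forall k, rsum n (fun i => ((x k i - x (S k) i) / sigma k + (mulAt m A (y (S k)) i - c i)) * (w i - x (S k) i)) <= 0).
   { intros k. pose proof (proj_dot n l u (W k) w Hw) as P. rewrite <- Hx' in P. pose proof (sig_pos k) as Sk.
     assert (EQ : dot n (vsub (W k) (x (S k))) (vsub w (x (S k))) = sigma k * rsum n (fun i => ((x k i - x (S k) i) / sigma k + (mulAt m A (y (S k)) i - c i)) * (w i - x (S k) i))).
     { unfold dot. rewrite <- rsum_scal. apply rsum_ext. intros. unfold W, vadd, vscal, vsub. cbv beta. field. lra. }
     rewrite EQ in P. nra. }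
   assert (Hdx : forall i, (i < n)%nat -> Un_cv (fun k => (x k i - x (S k) i) / sigma k) 0).
   { intros i Hi. apply sq_squeeze with (fun k => Dk k / (sigma 0 * sigma 0)).
     intros k. pose proof (HDx k i Hi). pose proof (sig_pos k). pose proof (sig_ge0 k).
     replace ((x k i - x (S k) i) / sigma k * ((x k i - x (S k) i) / sigma k)) with ((x (S k) i - x k i) * (x (S k) i - x k i) / (sigma k * sigma k)) by (field; lra).
     pose proof (Rle_0_sqr (x (S k) i - x k i)) as Hsq. unfold Rsqr in Hsq.
     unfold Rdiv. apply Rmult_le_compat; auto. left; apply Rinv_0_lt_compat; nra. apply Rinv_le_contravar; nra.
     replace 0 with (0 * / (sigma 0 * sigma 0)) by ring. unfold Rdiv. apply CV_mult; auto. apply CV_const. }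
   assert (Hl : Un_cv (fun k => rsum n (fun i => ((x (theta k) i - x (S (theta k)) i) / sigma (theta k) + (mulAt m A (y (S (theta k))) i - c i)) * (w i - x (S (theta k)) i)))
                (rsum n (fun i => (0 + (mulAt m A ys i - c i)) * (w i - xs i)))).
   { apply (rsum_cv n (fun k i => ((x (theta k) i - x (S (theta k)) i) / sigma (theta k) + (mulAt m A (y (S (theta k))) i - c i)) * (w i - x (S (theta k)) i))).
     intros i Hi. apply CV_mult. apply CV_plus. apply (cv_sub (fun k => (x k i - x (S k) i) / sigma k)); auto.
     apply CV_minus. unfold mulAt. apply (rsum_cv m (fun k j => A j i * y (S (theta k)) j) (fun j => A j i * ys j)).
     intros j Hj. apply CV_mult. apply CV_const. auto. apply CV_const.
     apply CV_minus. apply CV_const. auto. }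
   pose proof (lim_le _ _ 0 Hl (fun k => Hg (theta k))).
   unfold dot, vsub. rewrite (rsum_ext _ _ (fun i => (0 + (mulAt m A ys i - c i)) * (w i - xs i))). auto. intros; ring.
Qed.

Lemma final_conv ys xs : KKT m n A b c l u ys xs ->
  (forall e, e > 0 -> forall N, exists k, (N <= k)%nat /\ Rk ys xs k < e) -> Un_cv (Rk ys xs) 0.
Proof. intros HK Hc e He. destruct (HEtail (e / 4)) as [N0 HN0]. lra.
 destruct (Hc (e / 2) ltac:(lra) N0) as [j [Hj HRj]]. exists j. intros k Hk.
 pose proof (fejer_gen ys xs HK j k Hk). pose proof (HN0 j Hj). pose proof (HE k). pose proof (Rk_nonneg ys xs k).
 unfold R_dist. rewrite Rminus_0_r, Rabs_right by lra. lra. Qed.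

Lemma cluster_small theta ys xs : incr theta ->
  (forall i, (i < n)%nat -> Un_cv (fun k => x (S (theta k)) i) (xs i)) ->
  (forall j, (j < m)%nat -> Un_cv (fun k => y (S (theta k)) j) (ys j)) ->
  forall e, e > 0 -> forall N, exists k, (N <= k)%nat /\ Rk ys xs k < e.
Proof. intros Hth Hxs Hys e He N.
 assert (Hc : Un_cv (fun k => tau 0 * dot m (vsub (y (S (theta k))) ys) (vsub (y (S (theta k))) ys) + dot n (vsub (x (S (theta k))) xs) (vsub (x (S (theta k))) xs)) (tau 0 * 0 + 0)).
 { apply CV_plus. apply CV_scal. rewrite <- (rsum_zero m). unfold dot.
   apply (rsum_cv m (fun k j => vsub (y (S (theta k))) ys j * vsub (y (S (theta k))) ys j)).
   intros j Hj. replace 0 with ((ys j - ys j) * (ys j - ys j)) by ring. unfold vsub. apply CV_mult; apply CV_minus; auto; apply CV_const.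
   rewrite <- (rsum_zero n). unfold dot.
   apply (rsum_cv n (fun k j => vsub (x (S (theta k))) xs j * vsub (x (S (theta k))) xs j)).
   intros j Hj. replace 0 with ((xs j - xs j) * (xs j - xs j)) by ring. unfold vsub. apply CV_mult; apply CV_minus; auto; apply CV_const. }
 replace (tau 0 * 0 + 0) with 0 in Hc by ring.
 destruct (Hc (e * e)) as [K HK]. nra.
 exists (S (theta (max N K))). split. pose proof (incr_ge theta Hth (max N K)). lia.
 specialize (HK (max N K) (Nat.le_max_r _ _)). unfold R_dist in HK. rewrite Rminus_0_r in HK.
 set (k := theta (max N K)) in *.
 assert (Phi ys xs (tau (S k)) (y (S k)) (x (S k)) < e * e).
 { unfold Phi. pose proof (dot_nonneg m (vsub (y (S k)) ys)). pose proof (dot_nonneg n (vsub (x (S k)) xs)).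
   pose proof (tau_le0 (S k)). pose proof (Htau_pos (S k)).
   apply Rabs_def2 in HK. destruct HK. nra. }
 unfold Rk. rewrite <- (sqrt_square e) by lra. apply sqrt_lt_1_alt. split. apply Phi_nonneg. left; apply Htau_pos. lra.
Qed.
End Main.

Theorem mainTheorem8
  (m n : nat) (A : nat -> nat -> R) (b c : vec) (l u : nat -> option R)
  (sigma tau eps : nat -> R) (tau_inf : R) (x y : nat -> vec)
  (HP : exists xs, P_optimal m n A b c l u xs)
  (HD : exists ys, D_optimal m n A b c l u ys)
  (HA : full_row_rank m n A)
  (Hsig0 : 0 < sigma 0%nat)
  (Hsig_mon : forall k, sigma k <= sigma (S k))
  (Htau_pos : forall k, 0 < tau k)
  (Htau_mon : forall k, tau (S k) <= tau k)
  (Htau_lim : Un_cv tau tau_inf)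
  (Htau_inf : 0 < tau_inf)
  (Heps_pos : forall k, 0 <= eps k)
  (Heps_sum : exists s, Un_cv (fun N => sum_f_R0 eps N) s)
  (Hstop : forall k,
     vnorm m (grad_psi m n A b c l u (sigma k) (tau k) (x k) (y k) (y (S k)))
       <= Rmin (sqrt (tau k)) 1 / sigma k * eps k)
  (Hx : forall k,
     x (S k) = projK l u (vsub (x k) (vscal (sigma k) (vsub c (mulAt m A (y (S k))))))) :
  (exists M, forall k, vnorm m (y k) <= M /\ vnorm n (x k) <= M) /\
  (exists xs, P_optimal m n A b c l u xs /\
     Un_cv (fun k => vnorm n (vsub (x k) xs)) 0) /\
  (exists ys, D_optimal m n A b c l u ys /\
     Un_cv (fun k => vnorm m (vsub (y k) ys)) 0).
Proof.
 destruct HP as [xb HPo]. destruct (KKT_exists m n A b c l u xb HPo) as [yb HKb].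
 assert (HK0 : inK n l u xb) by apply HKb.
 destruct Heps_sum as [Es HEs].
 assert (Hsum_eq : forall N, sum_f_R0 eps N = rsum (S N) eps).
 { induction N; simpl. lra. simpl in IHN. rewrite IHN. lra. }
 assert (Hmono : forall i j, (i <= j)%nat -> rsum i eps <= rsum j eps).
 { intros i j Hij. induction Hij. lra. simpl. specialize (Heps_pos m0). lra. }
 assert (HE : forall k, rsum k eps <= Es).
 { intros k. apply (lim_ge (fun N => sum_f_R0 eps (N + k)) Es).
   apply (cv_sub (fun N => sum_f_R0 eps N) Es (fun N => (N + k)%nat)); auto. intros j; lia.
   intros N. rewrite Hsum_eq. apply Hmono. lia. }
 assert (HEtail : forall e, e > 0 -> exists N, forall k, (N <= k)%nat -> Es - rsum k eps < e).
 { intros e He. destruct (HEs e He) as [N HN]. exists (S N). intros k Hk. destruct k. lia.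
   specialize (HN k ltac:(lia)). rewrite Hsum_eq in HN. unfold R_dist in HN. apply Rabs_def2 in HN. lra. }
 pose proof (bounded_iter m n A b c l u sigma tau eps tau_inf x y Hsig0 Hsig_mon Htau_pos Htau_mon Htau_lim Htau_inf Heps_pos Hstop Hx xb HK0 Es HE yb xb HKb) as Bnd.
 set (B := Rk m n tau x y yb xb 0 + 2 * Es) in *.
 assert (HB : 0 <= B). { unfold B. pose proof (sqrt_pos (Phi m n yb xb (tau 0%nat) (y 0%nat) (x 0%nat))). pose proof (HE 0%nat). simpl in H0. unfold Rk. lra. }
 assert (HBs : 0 <= B / sqrt tau_inf). { unfold Rdiv. apply Rmult_le_pos; auto. left; apply Rinv_0_lt_compat, sqrt_lt_R0; auto. }
 assert (Hy_eq : forall k, y k = vadd (vsub (y k) yb) yb) by (intros; apply functional_extensionality; intros; unfold vadd, vsub; ring).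
 assert (Hx_eq : forall k, x k = vadd (vsub (x k) xb) xb) by (intros; apply functional_extensionality; intros; unfold vadd, vsub; ring).
 assert (Hynb : forall k, vnorm m (y k) <= B / sqrt tau_inf + vnorm m yb).
 { intros k. rewrite (Hy_eq k). eapply Rle_trans. apply vnorm_triangle. destruct (Bnd k). lra. }
 assert (Hxnb : forall k, vnorm n (x k) <= B + vnorm n xb).
 { intros k. rewrite (Hx_eq k). eapply Rle_trans. apply vnorm_triangle. destruct (Bnd k). lra. }
 pose proof (vnorm_nonneg m yb). pose proof (vnorm_nonneg n xb).
 split.
 { exists (B / sqrt tau_inf + vnorm m yb + (B + vnorm n xb)). intros k. split.
   pose proof (Hynb k). lra. pose proof (Hxnb k). lra. }
 destruct (BWd n (fun k => x (S k)) (B + vnorm n xb)) as [phi [Hphi [Lx HLx]]].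
 { intros k i Hi. apply Rle_trans with (vnorm n (x (S k))); [apply comp_le_vnorm; auto | apply Hxnb]. }
 destruct (BWd m (fun k => y (S (phi k))) (B / sqrt tau_inf + vnorm m yb)) as [psi [Hpsi [Ly HLy]]].
 { intros k i Hi. apply Rle_trans with (vnorm m (y (S (phi k)))); [apply comp_le_vnorm; auto | apply Hynb]. }
 set (theta := fun k => phi (psi k)).
 assert (Hth : incr theta) by exact (incr_comp phi psi Hphi Hpsi).
 assert (Hxs : forall i, (i < n)%nat -> Un_cv (fun k => x (S (theta k)) i) (Lx i)).
 { intros i Hi. apply (cv_sub (fun k => x (S (phi k)) i)); auto. }
 assert (Hys : forall j, (j < m)%nat -> Un_cv (fun k => y (S (theta k)) j) (Ly j)) by auto.
 pose proof (cluster_KKT m n A b c l u sigma tau eps tau_inf x y Hsig0 Hsig_mon Htau_pos Htau_mon Htau_lim Htau_inf Heps_pos Hstop Hx xb HK0 Es HE yb xb theta Ly Lx HKb Hth Hxs Hys) as HKs.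
 pose proof (cluster_small m n tau x y Htau_pos Htau_mon theta Ly Lx Hth Hxs Hys) as Hsm.
 pose proof (final_conv m n A b c l u sigma tau eps x y Hsig0 Hsig_mon Htau_pos Htau_mon Heps_pos Hstop Hx xb HK0 Es HE HEtail Ly Lx HKs Hsm) as Hcv.
 split.
 - exists Lx. split. apply (KKT_P m n A b c l u Ly Lx HKs).
   apply squeeze0 with (Rk m n tau x y Ly Lx); auto.
   intros k. rewrite Rabs_right by (apply Rle_ge, vnorm_nonneg). unfold vnorm, Rk, Phi. apply sqrt_le_1_alt.
   pose proof (dot_nonneg m (vsub (y k) Ly)). pose proof (Htau_pos k). nra.
 - exists Ly. split. apply (KKT_D m n A b c l u Ly Lx HKs).
   apply squeeze0 with (fun k => Rk m n tau x y Ly Lx k * / sqrt tau_inf).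
   intros k. rewrite Rabs_right by (apply Rle_ge, vnorm_nonneg).
   pose proof (sqrt_lt_R0 _ Htau_inf).
   apply Rmult_le_reg_r with (sqrt tau_inf); auto. rewrite Rmult_assoc, Rinv_l, Rmult_1_r by lra.
   unfold vnorm, Rk, Phi. rewrite Rmult_comm, <- sqrt_mult by (lra || apply dot_nonneg). apply sqrt_le_1_alt.
   pose proof (dot_nonneg m (vsub (y k) Ly)). pose proof (dot_nonneg n (vsub (x k) Lx)).
   pose proof (tau_geinf tau tau_inf Htau_mon Htau_lim k). nra.
   replace 0 with (0 * / sqrt tau_inf) by ring. apply CV_mult; auto. apply CV_const.
Qed.
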